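(* Let $\Phi$ be a join doctrine, let $X,Y$ be $\Phi$-continuous $\Phi$-suplattices, and let $f:X\to Y$ be a monotone map with a left adjoint $f^+:Y\to X$. Then $f$ preserves $\Phi$-joins iff $f^+$ preserves $\ll$ (i.e. $y\ll y'$ implies $f^+(y)\ll f^+(y')$). Consequently, if $X,Y$ are $\Phi$-continuous lattices, then $f\mapsto f^+$ is an order-isomorphism from $\Phi\mathbf{CtsLat}(X,Y)^{\mathrm{op}}$ onto the poset of maps $g:Y\to X$ preserving arbitrary joins and preserving $\ll$ (both ordered pointwise).
   Context: A join doctrine is a class $\Phi$ of posets such that: (1) the one-element poset is in $\Phi$; (2) if a poset $P$ is the union of a set $\mathcal{S}$ of subposets each in $\Phi$ and $\mathcal{S}$ (ordered by inclusion) is in $\Phi$, then $P\in\Phi$; (3) if $f:P\to Q$ is monotone with cofinal image and $P\in\Phi$ then $Q\in\Phi$; (4) cofinal subposets of members of $\Phi$ are in $\Phi$. For a poset $X$, $\Phi(X)$ is the set of lower subsets of $X$ which, as subposets, belong to $\Phi$. A $\Phi$-join is a join of a subset belonging to $\Phi$; a $\Phi$-suplattice is a poset with all $\Phi$-joins. For $x\in X$: $\Downarrow x:=\bigcap\{\phi\in\Phi(X)\mid x\le\bigvee\phi\}$; $y\ll x$ iff $y\in\Downarrow x$. $X$ is $\Phi$-continuous if for each $x$ there is $\phi\in\Phi(X)$ with $\phi\subseteq\Downarrow x$ and $x\le\bigvee\phi$; a $\Phi$-continuous lattice is a complete lattice that is $\Phi$-continuous. $\Phi\mathbf{CtsLat}(X,Y)$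 is the set of maps $X\to Y$ preserving arbitrary meets and $\Phi$-joins, ordered pointwise; its opposite has the reversed order. *)

(* Defs.v *)
From Stdlib Require Import PropExtensionality FunctionalExtensionality ProofIrrelevance.

Set Implicit Arguments.

Record Poset := {
  carrier :> Type;
  le : carrier -> carrier -> Prop;
  le_refl : forall x, le x x;
  le_trans : forall x y z, le x y -> le y z -> le x z;
  le_antisym : forall x y, le x y -> le y x -> x = y
}.

Arguments le {p} _ _.
Arguments le_antisym {p x y} _ _.
Arguments le_trans {p x y z} _ _.
Arguments le_refl {p} x.

Definition sub_poset (P : Poset) (A : P -> Prop) : Poset.
Proof.
  refine {| carrier := {x : P | A x};
            le := fun a b => le (proj1_sig a) (proj1_sig b) |}.
  - intros [x hx]; apply le_refl.
  - intros [x hx] [y hy] [z hz]; simpl; apply le_trans.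
  - intros [x hx] [y hy] h1 h2; simpl in *.
    assert (e := le_antisym h1 h2); subst y.
    f_equal; apply proof_irrelevance.
Defined.

Definition incl_poset {P : Type} (S : (P -> Prop) -> Prop) : Poset.
Proof.
  refine {| carrier := {A : P -> Prop | S A};
            le := fun A B => forall x, proj1_sig A x -> proj1_sig B x |}.
  - intros [A hA] x h; exact h.
  - intros [A hA] [B hB] [C hC] h1 h2 x h; auto.
  - intros [A hA] [B hB] h1 h2; simpl in *.
    assert (e : A = B).
    { apply functional_extensionality; intro x;
      apply propositional_extensionality; split; auto. }
    subst B; f_equal; apply proof_irrelevance.
Defined.

Definition unit_poset : Poset.
Proof.
  refine {| carrier := unit; le := fun _ _ => True |}; auto.
  intros [] [] _ _; reflexivity.
Defined.

Definition monotone {P Q : Poset} (f : P -> Q) : Prop :=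
  forall x y, le x y -> le (f x) (f y).

Definition cofinal_image {P Q : Poset} (f : P -> Q) : Prop :=
  forall q, exists p, le q (f p).

Definition cofinal {P : Poset} (A : P -> Prop) : Prop :=
  forall x, exists a, A a /\ le x a.

Definition poset_class := Poset -> Prop.

Definition join_doctrine (Phi : poset_class) : Prop :=
  Phi unit_poset /\
  (forall (P : Poset) (S : (P -> Prop) -> Prop),
               (forall x : P, exists A, S A /\ A x) ->
               (forall A, S A -> Phi (sub_poset P A)) ->
               Phi (incl_poset S) ->
               Phi P) /\
  (forall (P Q : Poset) (f : P -> Q),
               monotone f -> cofinal_image f -> Phi P -> Phi Q) /\
  (forall (P : Poset) (A : P -> Prop),
               cofinal A -> Phi P -> Phi (sub_poset P A)).

Definition upper_bound {X : Poset} (D : X -> Prop) (s : X) : Prop :=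
  forall d, D d -> le d s.
Definition is_lub {X : Poset} (D : X -> Prop) (s : X) : Prop :=
  upper_bound D s /\ forall u, upper_bound D u -> le s u.
Definition lower_bound {X : Poset} (D : X -> Prop) (s : X) : Prop :=
  forall d, D d -> le s d.
Definition is_glb {X : Poset} (D : X -> Prop) (s : X) : Prop :=
  lower_bound D s /\ forall u, lower_bound D u -> le u s.

Definition lower_set {X : Poset} (A : X -> Prop) : Prop :=
  forall x y, le y x -> A x -> A y.

Definition image {X Y : Type} (f : X -> Y) (D : X -> Prop) : Y -> Prop :=
  fun y => exists x, D x /\ y = f x.

Definition PhiX (Phi : poset_class) {X : Poset} (A : X -> Prop) : Prop :=
  lower_set A /\ Phi (sub_poset X A).

Definition Phi_suplattice (Phi : poset_class) (X : Poset) : Prop :=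
  forall D : X -> Prop, Phi (sub_poset X D) -> exists s, is_lub D s.

Definition complete_lattice (X : Poset) : Prop :=
  forall D : X -> Prop, exists s, is_lub D s.

Definition way_below_set (Phi : poset_class) {X : Poset} (x : X) : X -> Prop :=
  fun y => forall phi : X -> Prop, PhiX Phi phi ->
           forall s, is_lub phi s -> le x s -> phi y.

Definition way_below (Phi : poset_class) {X : Poset} (y x : X) : Prop :=
  way_below_set Phi x y.

Definition Phi_continuous (Phi : poset_class) (X : Poset) : Prop :=
  forall x : X, exists phi : X -> Prop,
    PhiX Phi phi /\ (forall y, phi y -> way_below_set Phi x y) /\
    exists s, is_lub phi s /\ le x s.

Definition left_adjoint {X Y : Poset} (g : Y -> X) (f : X -> Y) : Prop :=
  forall (y : Y) (x : X), le (g y) x <-> le y (f x).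

Definition preserves_Phi_joins (Phi : poset_class) {X Y : Poset} (f : X -> Y) : Prop :=
  forall D : X -> Prop, Phi (sub_poset X D) ->
    forall s, is_lub D s -> is_lub (image f D) (f s).

Definition preserves_all_joins {X Y : Poset} (f : X -> Y) : Prop :=
  forall (D : X -> Prop) s, is_lub D s -> is_lub (image f D) (f s).

Definition preserves_all_meets {X Y : Poset} (f : X -> Y) : Prop :=
  forall (D : X -> Prop) s, is_glb D s -> is_glb (image f D) (f s).

Definition preserves_way_below (Phi : poset_class) {X Y : Poset} (g : X -> Y) : Prop :=
  forall y y' : X, way_below Phi y y' -> way_below Phi (g y) (g y').

Definition PhiCtsLat_map (Phi : poset_class) {X Y : Poset} (f : X -> Y) : Prop :=
  preserves_all_meets f /\ preserves_Phi_joins Phi f.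

Definition pointwise_le {X Y : Poset} (f g : X -> Y) : Prop :=
  forall x, le (f x) (g x).

(* Main.v *)
Require Import Defs.
From Stdlib Require Import ClassicalEpsilon.

Definition downset {X : Poset} (D : X -> Prop) : X -> Prop :=
  fun x => exists d, D d /\ le x d.

Lemma downset_lower {X : Poset} (D : X -> Prop) : lower_set (downset D).
Proof. intros x y hyx [d [hd hxd]]. exists d; split; auto. exact (le_trans hyx hxd). Qed.

Lemma downset_lub {X : Poset} (D : X -> Prop) s : is_lub D s -> is_lub (downset D) s.
Proof.
  intros [h1 h2]; split.
  - intros x [d [hd hxd]]. exact (le_trans hxd (h1 d hd)).
  - intros u hu. apply h2. intros d hd. apply hu. exists d; split; auto. apply le_refl.
Qed.

Lemma Phi_down_image (Phi : poset_class) (hPhi : join_doctrine Phi)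
  {X Y : Poset} (f : X -> Y) (D : X -> Prop) :
  monotone f -> Phi (sub_poset X D) -> Phi (sub_poset Y (downset (image f D))).
Proof.
  intros hm hD. destruct hPhi as [_ [_ [h3 _]]].
  pose (h := fun a : sub_poset X D =>
    exist (downset (image f D)) (f (proj1_sig a))
      (ex_intro _ (f (proj1_sig a))
        (conj (ex_intro _ (proj1_sig a) (conj (proj2_sig a) eq_refl)) (le_refl _)))
      : sub_poset Y (downset (image f D))).
  apply (h3 _ _ h); auto.
  - intros [a ha] [b hb] hab. simpl in *. apply hm; exact hab.
  - intros [q [d [[x [hx ->]] hq]]]. exists (exist _ x hx). simpl. exact hq.
Qed.

Lemma Phi_down (Phi : poset_class) (hPhi : join_doctrine Phi)
  {X : Poset} (D : X -> Prop) :
  Phi (sub_poset X D) -> Phi (sub_poset X (downset D)).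
Proof.
  intros hD. destruct hPhi as [_ [_ [h3 _]]].
  pose (h := fun a : sub_poset X D =>
    exist (downset D) (proj1_sig a)
      (ex_intro _ (proj1_sig a) (conj (proj2_sig a) (le_refl _)))
      : sub_poset X (downset D)).
  apply (h3 _ _ h); auto.
  - intros [a ha] [b hb] hab. simpl in *. exact hab.
  - intros [q [d [hd hq]]]. exists (exist _ d hd). simpl. exact hq.
Qed.

Lemma adj_unit {X Y : Poset} (g : Y -> X) (f : X -> Y) y :
  left_adjoint g f -> le y (f (g y)).
Proof. intros ha. apply ha. apply le_refl. Qed.

Lemma adj_counit {X Y : Poset} (g : Y -> X) (f : X -> Y) x :
  left_adjoint g f -> le (g (f x)) x.
Proof. intros ha. apply ha. apply le_refl. Qed.

Lemma adj_mono_f {X Y : Poset} (g : Y -> X) (f : X -> Y) :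
  left_adjoint g f -> monotone f.
Proof. intros ha x x' h. apply ha. exact (le_trans (adj_counit g f x ha) h). Qed.

Lemma adj_mono_g {X Y : Poset} (g : Y -> X) (f : X -> Y) :
  left_adjoint g f -> monotone g.
Proof. intros ha y y' h. apply ha. exact (le_trans h (adj_unit g f y' ha)). Qed.

Lemma adj_joins {X Y : Poset} (g : Y -> X) (f : X -> Y) :
  left_adjoint g f -> preserves_all_joins g.
Proof.
  intros ha D s [h1 h2]. split.
  - intros d [x [hx ->]]. apply (adj_mono_g g f ha). auto.
  - intros u hu. apply ha. apply h2. intros d hd. apply ha. apply hu. exists d; auto.
Qed.

Lemma adj_meets {X Y : Poset} (g : Y -> X) (f : X -> Y) :
  left_adjoint g f -> preserves_all_meets f.
Proof.
  intros ha D s [h1 h2]. split.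
  - intros d [x [hx ->]]. apply (adj_mono_f g f ha). auto.
  - intros u hu. apply ha. apply h2. intros d hd. apply ha. apply hu. exists d; auto.
Qed.

Lemma wb_mono (Phi : poset_class) {X : Poset} (y x x' : X) :
  way_below Phi y x -> le x x' -> way_below Phi y x'.
Proof. intros h hx phi hp s hs hle. apply (h phi hp s hs). exact (le_trans hx hle). Qed.

Lemma part1_fwd (Phi : poset_class) (hPhi : join_doctrine Phi) {X Y : Poset}
  (f : X -> Y) (fp : Y -> X) :
  monotone f -> left_adjoint fp f -> preserves_Phi_joins Phi f -> preserves_way_below Phi fp.
Proof.
  intros hm ha hj y y' hw phi [hl hP] s hs hle.
  apply ha in hle.
  assert (hi := hj phi hP s hs).
  assert (hd := hw (downset (image f phi))
     (conj (downset_lower _) (Phi_down_image Phi hPhi f phi hm hP))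
     (f s) (downset_lub _ _ hi) hle).
  destruct hd as [d [[x [hx ->]] hyd]].
  apply (hl x); auto. apply ha; exact hyd.
Qed.

Lemma part1_bwd (Phi : poset_class) (hPhi : join_doctrine Phi) {X Y : Poset}
  (f : X -> Y) (fp : Y -> X) :
  Phi_continuous Phi Y ->
  monotone f -> left_adjoint fp f -> preserves_way_below Phi fp -> preserves_Phi_joins Phi f.
Proof.
  intros hc hm ha hw D hD s [hs1 hs2]. split.
  - intros d [x [hx ->]]. apply hm; auto.
  - intros u hu. destruct (hc (f s)) as [psi [_ [hpw [t [[ht1 ht2] hle]]]]].
    apply (le_trans hle). apply ht2. intros y hy.
    assert (h1 : way_below Phi (fp y) s).
    { apply (wb_mono Phi _ (fp (f s))). apply hw. exact (hpw y hy).
      apply (adj_counit fp f s ha). }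
    assert (hd := h1 (downset D) (conj (downset_lower _) (Phi_down Phi hPhi D hD))
       s (downset_lub _ _ (conj hs1 hs2)) (le_refl _)).
    destruct hd as [d [hd hle']]. apply ha in hle'.
    apply (le_trans hle'). apply hu. exists d; auto.
Qed.

Lemma cl_glb {X : Poset} : complete_lattice X -> forall D : X -> Prop, exists s, is_glb D s.
Proof.
  intros hc D. destruct (hc (lower_bound D)) as [s [h1 h2]]. exists s. split.
  - intros d hd. apply h2. intros u hu. apply hu; auto.
  - intros u hu. apply h1; auto.
Qed.

Lemma meets_mono {X Y : Poset} (f : X -> Y) : preserves_all_meets f -> monotone f.
Proof.
  intros hm x x' h.
  assert (hg : is_glb (fun z => z = x \/ z = x') x).
  { split. intros d [-> | ->]; auto using le_refl. intros u hu. apply hu; auto. }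
  destruct (hm _ _ hg) as [h1 _]. apply h1. exists x'; auto.
Qed.

Lemma joins_mono {X Y : Poset} (f : X -> Y) : preserves_all_joins f -> monotone f.
Proof.
  intros hm x x' h.
  assert (hg : is_lub (fun z => z = x \/ z = x') x').
  { split. intros d [-> | ->]; auto using le_refl. intros u hu. apply hu; auto. }
  destruct (hm _ _ hg) as [h1 _]. apply h1. exists x; auto.
Qed.

Theorem proposition2p7 (Phi : poset_class) (hPhi : join_doctrine Phi) :
  (* Part 1 *)
  (forall (X Y : Poset),
     Phi_suplattice Phi X -> Phi_suplattice Phi Y ->
     Phi_continuous Phi X -> Phi_continuous Phi Y ->
     forall (f : X -> Y) (fp : Y -> X),
       monotone f -> left_adjoint fp f ->
       (preserves_Phi_joins Phi f <-> preserves_way_below Phi fp)) /\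
  (* Part 2: f |-> f^+ is an order isomorphism
     ΦCtsLat(X,Y)^op  ≅  { g : Y -> X | g preserves all joins and ≪ } *)
  (forall (X Y : Poset),
     complete_lattice X -> complete_lattice Y ->
     Phi_continuous Phi X -> Phi_continuous Phi Y ->
     (* well-defined into the target *)
     (forall f : X -> Y, PhiCtsLat_map Phi f ->
        exists fp : Y -> X, left_adjoint fp f /\
          preserves_all_joins fp /\ preserves_way_below Phi fp) /\
     (* surjective *)
     (forall g : Y -> X, preserves_all_joins g -> preserves_way_below Phi g ->
        exists f : X -> Y, PhiCtsLat_map Phi f /\ left_adjoint g f) /\
     (* order-preserving and order-reflecting for the opposite order *)
     (forall (f1 f2 : X -> Y) (g1 g2 : Y -> X),
        PhiCtsLat_map Phi f1 -> PhiCtsLat_map Phi f2 ->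
        left_adjoint g1 f1 -> left_adjoint g2 f2 ->
        (pointwise_le f2 f1 <-> pointwise_le g1 g2))).
Proof.
  split.
  - intros X Y _ _ _ hcY f fp hm ha. split.
    + apply part1_fwd; auto.
    + apply part1_bwd; auto.
  - intros X Y hX hY _ hcY. split; [|split].
    + intros f [hmeet hj].
      pose (fp := fun y : Y => proj1_sig (constructive_indefinite_description _
                     (cl_glb hX (fun x => le y (f x))))).
      assert (hfp : forall y, is_glb (fun x => le y (f x)) (fp y)).
      { intros y. unfold fp. exact (proj2_sig (constructive_indefinite_description _ _)). }
      assert (ha : left_adjoint fp f).
      { intros y x. split.
        - intros h. apply (le_trans (y := f (fp y))).
          + destruct (hmeet _ _ (hfp y)) as [_ h2]. apply h2.
            intros d [z [hz ->]]. exact hz.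
          + apply (meets_mono f hmeet); auto.
        - intros h. destruct (hfp y) as [h1 _]. apply h1; auto. }
      exists fp. split; [exact ha|split].
      * apply (adj_joins fp f ha).
      * apply (part1_fwd Phi hPhi f fp (meets_mono f hmeet) ha hj).
    + intros g hg hw.
      pose (f := fun x : X => proj1_sig (constructive_indefinite_description _
                     (hY (fun y => le (g y) x)))).
      assert (hf : forall x, is_lub (fun y => le (g y) x) (f x)).
      { intros x. unfold f. exact (proj2_sig (constructive_indefinite_description _ _)). }
      assert (ha : left_adjoint g f).
      { intros y x. split.
        - intros h. destruct (hf x) as [h1 _]. apply h1; auto.
        - intros h. apply (le_trans (y := g (f x))).
          + apply (joins_mono g hg); auto.
          + destruct (hg _ _ (hf x)) as [_ h2]. apply h2.
            intros d [z [hz ->]]. exact hz. }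
      exists f. split; [split|exact ha].
      * apply (adj_meets g f ha).
      * apply (part1_bwd Phi hPhi f g hcY (adj_mono_f g f ha) ha hw).
    + intros f1 f2 g1 g2 _ _ h1 h2. split.
      * intros h y. apply h1. apply (le_trans (adj_unit g2 f2 y h2)). apply h.
      * intros h x. apply h1. apply (le_trans (h (f2 x))). apply (adj_counit g2 f2 x h2).
Qed.
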